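(* Let $n,m,p,N\in\mathbb{N}_+$, $B\in\mathbb{R}^{n\times m}$, $C\in\mathbb{R}^{p\times n}$ of full column rank, $x_0\in\mathbb{R}^n$, $r_1,\dots,r_N\in\mathbb{R}^p$, $r_0:=Cx_0$, and $\mathcal{S}_{\rm M1}\subseteq\mathbb{R}^{n\times n}\times\mathbb{R}^{m\times N}$. Let $v^*_{\rm A1}$ be the optimal value (infimum) of problem (AMOPUL1): minimize $\sum_{t=1}^N\|CAC^{\dagger}r_{t-1}+CBu_{t-1}-r_t\|_2$ over $(A,U)\in\mathcal{S}_{\rm M1}$, $U=(u_0,\dots,u_{N-1})$. Let $\epsilon_1,\dots,\epsilon_N\ge0$ and $$\mathcal{Z}_\epsilon:=\{(A,U)\in\mathcal{S}_{\rm M1}:\ \hat y_0=Cx_0,\ \hat y_t=CAC^{\dagger}\hat y_{t-1}+CBu_{t-1},\ \|\hat y_t-r_t\|_2\le\epsilon_t,\ t=1,\dots,N\}.$$ If $\mathcal{Z}_\epsilon\ne\emptyset$, then $$v^*_{\rm A1}\le(1+\gamma)\sum_{t=1}^{N-1}\epsilon_t+\epsilon_N,\qquad \gamma:=\inf_{(A,U)\in\mathcal{Z}_\epsilon}\|CAC^{\dagger}\|_2.$$ Moreover, if there exists $(A,U)\in\mathcal{S}_{\rm M1}$ such that the sequence defined by $\hat y_0=Cx_0$, $\hat y_t=CAC^{\dagger}\hat y_{t-1}+CBu_{t-1}$ satisfies $\hat y_t=r_t$ for $t=1,\dots,N$, then $v^*_{\rm A1}=0$.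
   Context: $C^{\dagger}$ is the Moore–Penrose inverse of $C$; $\|\cdot\|_2$ is the Euclidean norm for vectors and the spectral norm for matrices. In the paper $\mathcal{S}_{\rm M1}$ is assumed SD representable, though this is not used in the claim. *)

(* Defs.v *)
From HB Require Import structures.
From mathcomp Require Import all_boot all_order all_algebra.
From mathcomp Require Import all_classical all_reals.
Set Implicit Arguments. Unset Strict Implicit. Unset Printing Implicit Defensive.
Import Order.TTheory GRing.Theory Num.Theory.
Local Open Scope ring_scope.
Local Open Scope classical_set_scope.

Definition enorm (R : realType) (k : nat) (x : 'cV[R]_k) : R :=
  Num.sqrt (\sum_(i < k) (x i 0) ^+ 2).

Definition specnorm (R : realType) (a b : nat) (M : 'M[R]_(a, b)) : R :=
  sup ((fun x : 'cV[R]_b => enorm (M *m x)) @` [set x | enorm x <= 1]).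

Definition MP_inverse (R : realType) (p n : nat)
  (C : 'M[R]_(p, n)) (X : 'M[R]_(n, p)) : Prop :=
  [/\ C *m X *m C = C, X *m C *m X = X,
      (C *m X)^T = C *m X & (X *m C)^T = X *m C].

(* t-th column of U (0-based), zero if t is out of range *)
Definition ucol (R : realType) (m N : nat) (U : 'M[R]_(m, N)) (t : nat) : 'cV[R]_m :=
  \col_i (if insub t is Some j then U i j else 0).

Fixpoint yhat (R : realType) (n m p N : nat) (B : 'M[R]_(n, m)) (C : 'M[R]_(p, n))
  (Cd : 'M[R]_(n, p)) (x0 : 'cV[R]_n) (A : 'M[R]_n) (U : 'M[R]_(m, N)) (t : nat)
  : 'cV[R]_p :=
  match t with
  | 0 => C *m x0
  | t'.+1 => C *m A *m Cd *m yhat B C Cd x0 A U t' + C *m B *m ucol U t'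
  end.

Definition J_A1 (R : realType) (n m p N : nat) (B : 'M[R]_(n, m)) (C : 'M[R]_(p, n))
  (Cd : 'M[R]_(n, p)) (r : nat -> 'cV[R]_p) (A : 'M[R]_n) (U : 'M[R]_(m, N)) : R :=
  \sum_(t < N) enorm (C *m A *m Cd *m r t + C *m B *m ucol U t - r t.+1).

Definition v_A1 (R : realType) (n m p N : nat) (B : 'M[R]_(n, m)) (C : 'M[R]_(p, n))
  (Cd : 'M[R]_(n, p)) (r : nat -> 'cV[R]_p) (S : set ('M[R]_n * 'M[R]_(m, N))) : R :=
  inf ((fun z => J_A1 B C Cd r z.1 z.2) @` S).

Definition Z_eps (R : realType) (n m p N : nat) (B : 'M[R]_(n, m)) (C : 'M[R]_(p, n))
  (Cd : 'M[R]_(n, p)) (x0 : 'cV[R]_n) (r : nat -> 'cV[R]_p)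
  (S : set ('M[R]_n * 'M[R]_(m, N))) (eps : nat -> R) : set ('M[R]_n * 'M[R]_(m, N)) :=
  [set z | S z /\ forall t : nat, (1 <= t <= N)%N ->
     enorm (yhat B C Cd x0 z.1 z.2 t - r t) <= eps t].

(* Main.v *)
Require Import Defs.
From HB Require Import structures.
From mathcomp Require Import all_boot all_order all_algebra.
From mathcomp Require Import all_classical all_reals.
From mathcomp Require Import ring lra.
Import Order.TTheory GRing.Theory Num.Theory.
Local Open Scope ring_scope.
Local Open Scope classical_set_scope.

Section H.
Variable R : realType.
Local Set Implicit Arguments.

Lemma CS k (a b : 'I_k -> R) :
  (\sum_i a i * b i) ^+ 2 <= (\sum_i a i ^+ 2) * (\sum_i b i ^+ 2).
Proof.
have H0 : 0 <= \sum_i \sum_j (a i * b j - a j * b i) ^+ 2.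
  by apply: sumr_ge0 => i _; apply: sumr_ge0 => j _; exact: sqr_ge0.
have E : \sum_i \sum_j (a i * b j - a j * b i) ^+ 2 =
   \sum_i \sum_j (a i ^+ 2 * b j ^+ 2) + \sum_i \sum_j (b i ^+ 2 * a j ^+ 2)
   - 2 * \sum_i \sum_j ((a i * b i) * (a j * b j)).
  rewrite -!big_split /= mulr_sumr -sumrB; apply: eq_bigr => i _.
  rewrite mulr_sumr -!big_split -sumrB; apply: eq_bigr => j _ /=; ring.
have E1 : forall (f g : 'I_k -> R), \sum_i \sum_j (f i * g j) = (\sum_i f i) * (\sum_i g i).
  move=> f g; rewrite mulr_suml; apply: eq_bigr => i _; by rewrite mulr_sumr.
rewrite E !E1 in H0; rewrite expr2; lra.
Qed.

Lemma sumsq_ge0 k (x : 'cV[R]_k) : 0 <= \sum_i (x i 0) ^+ 2.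
Proof. by apply: sumr_ge0 => i _; exact: sqr_ge0. Qed.

Lemma enorm_ge0 k (x : 'cV[R]_k) : 0 <= enorm x.
Proof. exact: sqrtr_ge0. Qed.

Lemma enorm_sq k (x : 'cV[R]_k) : enorm x ^+ 2 = \sum_i (x i 0) ^+ 2.
Proof. by rewrite /enorm sqr_sqrtr // sumsq_ge0. Qed.

Lemma enormN k (x : 'cV[R]_k) : enorm (- x) = enorm x.
Proof. rewrite /enorm; congr Num.sqrt; apply: eq_bigr => i _; by rewrite mxE sqrrN. Qed.

Lemma enorm0 k : enorm (0 : 'cV[R]_k) = 0.
Proof. rewrite /enorm big1 ?sqrtr0 // => i _; by rewrite mxE expr0n. Qed.

Lemma enormD k (x y : 'cV[R]_k) : enorm (x + y) <= enorm x + enorm y.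
Proof.
have hx := enorm_ge0 x; have hy := enorm_ge0 y.
have hxy := enorm_ge0 (x + y).
have cs := CS (fun i => x i 0) (fun i => y i 0).
rewrite -!enorm_sq /= in cs.
set s := \sum_i x i 0 * y i 0 in cs.
have hs : s <= enorm x * enorm y.
  have : s ^+ 2 <= (enorm x * enorm y) ^+ 2 by rewrite exprMn.
  have p := mulr_ge0 hx hy.
  case: (lerP s 0) => hs0; first by lra.
  rewrite ler_pXn2r // nnegrE; lra.
have e : enorm (x + y) ^+ 2 = enorm x ^+ 2 + 2 * s + enorm y ^+ 2.
  rewrite !enorm_sq /s mulr_sumr -!big_split; apply: eq_bigr => i _ /=.
  rewrite mxE; ring.
nra.
Qed.

Lemma enormB k (x y : 'cV[R]_k) : enorm (x - y) <= enorm x + enorm y.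
Proof. by rewrite -(enormN y) enormD. Qed.

Lemma enormZ k (a : R) (x : 'cV[R]_k) : enorm (a *: x) = `|a| * enorm x.
Proof.
rewrite /enorm -sqrtr_sqr -sqrtrM ?sqr_ge0 //; congr Num.sqrt.
rewrite mulr_sumr; apply: eq_bigr => i _; by rewrite mxE exprMn.
Qed.

Definition frob a b (M : 'M[R]_(a, b)) := Num.sqrt (\sum_i \sum_j (M i j) ^+ 2).

Lemma enorm_frob a b (M : 'M[R]_(a, b)) x : enorm (M *m x) <= frob M * enorm x.
Proof.
rewrite /frob /enorm -sqrtrM; last by apply: sumr_ge0 => i _; apply: sumr_ge0 => j _; exact: sqr_ge0.
rewrite ler_sqrt; last first.
  by apply: mulr_ge0; [apply: sumr_ge0 => i _; apply: sumr_ge0 => j _; exact: sqr_ge0| exact: sumsq_ge0].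
rewrite mulr_suml; apply: ler_sum => i _; rewrite mxE.
exact: (CS (fun j => M i j) (fun j => x j 0)).
Qed.

Lemma spec_hassup a b (M : 'M[R]_(a, b)) :
  has_sup ((fun x : 'cV[R]_b => enorm (M *m x)) @` [set x | enorm x <= 1]).
Proof.
split; first by exists (enorm (M *m 0)); exists 0 => //=; rewrite enorm0.
exists (frob M) => _ [x hx <-]; apply: le_trans (enorm_frob M x) _.
rewrite -[X in _ <= X]mulr1; apply: ler_wpM2l => //; exact: sqrtr_ge0.
Qed.

Lemma specnorm_ge0 a b (M : 'M[R]_(a, b)) : 0 <= specnorm M.
Proof.
apply: le_trans (sup_upper_bound (spec_hassup M) _).
  exact: (enorm_ge0 (M *m 0)).
by exists 0 => //=; rewrite enorm0.
Qed.

Lemma enorm_spec a b (M : 'M[R]_(a, b)) x : enorm (M *m x) <= specnorm M * enorm x.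
Proof.
have [h0|hpos] := eqVneq (enorm x) 0.
  rewrite h0 mulr0; apply: le_trans (enorm_frob M x) _; by rewrite h0 mulr0.
have hc : 0 < enorm x by rewrite lt_neqAle eq_sym hpos enorm_ge0.
have h1 : enorm ((enorm x)^-1 *: x) <= 1.
  by rewrite enormZ ger0_norm ?invr_ge0 ?enorm_ge0 // mulVf.
have := sup_upper_bound (spec_hassup M) (ex_intro2 (fun y => enorm y <= 1) (fun y => enorm (M *m y) = enorm (M *m ((enorm x)^-1 *: x))) _ h1 erefl).
rewrite /= -scalemxAr enormZ ger0_norm ?invr_ge0 ?enorm_ge0 // -/(specnorm M).
rewrite mulrC ler_pdivrMr //.
Qed.


Lemma key (n m p N : nat) (hN : (0 < N)%N)
  (B : 'M[R]_(n, m)) (C : 'M[R]_(p, n)) (Cd : 'M[R]_(n, p))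
  (x0 : 'cV[R]_n) (r : nat -> 'cV[R]_p) (hr0 : r 0%N = C *m x0)
  (A : 'M[R]_n) (U : 'M[R]_(m, N)) (eps : nat -> R)
  (hz : forall t : nat, (1 <= t <= N)%N -> enorm (yhat B C Cd x0 A U t - r t) <= eps t) :
  J_A1 B C Cd r A U <= (1 + specnorm (C *m A *m Cd)) * (\sum_(1 <= t < N) eps t) + eps N.
Proof.
set M := C *m A *m Cd.
set e := fun t => r t - yhat B C Cd x0 A U t.
have he : forall t, (1 <= t <= N)%N -> enorm (e t) <= eps t.
  by move=> t ht; rewrite /e -enormN opprB; exact: hz.
have e0 : e 0%N = 0 by rewrite /e /= hr0 subrr.
have s0 := specnorm_ge0 M.
have step : J_A1 B C Cd r A U <= \sum_(0 <= t < N) (specnorm M * enorm (e t) + enorm (e t.+1)).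
  rewrite big_mkord /J_A1; apply: ler_sum => t _.
  have -> : C *m A *m Cd *m r t + C *m B *m ucol U t - r t.+1 = M *m e t - e t.+1.
    by rewrite /e /= mulmxBr -/M opprB !addrA subrK.
  apply: le_trans (enormB _ _) _; rewrite lerD2r; exact: enorm_spec.
apply: le_trans step _.
rewrite big_split /= -mulr_sumr.
have -> : \sum_(0 <= t < N) enorm (e t.+1) = \sum_(1 <= t < N.+1) enorm (e t) by rewrite big_add1.
rewrite big_nat_recr // [X in specnorm M * X]big_ltn //= e0 enorm0 add0r.
have h1 : \sum_(1 <= t < N) enorm (e t) <= \sum_(1 <= t < N) eps t.
  apply: ler_sum_nat => t /andP[h1 h2]; apply: he; rewrite h1 /=; exact: ltnW.
have h2 : enorm (e N) <= eps N by apply: he; rewrite hN leqnn.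
have h3 := ler_wpM2l s0 h1.
lra.
Qed.
End H.

Lemma J_ge0 (R : realType) (n m p N : nat) (B : 'M[R]_(n, m)) (C : 'M[R]_(p, n))
  (Cd : 'M[R]_(n, p)) (r : nat -> 'cV[R]_p) (A : 'M[R]_n) (U : 'M[R]_(m, N)) :
  0 <= J_A1 B C Cd r A U.
Proof. by apply: sumr_ge0 => t _; exact: enorm_ge0. Qed.

Lemma v_le (R : realType) (n m p N : nat) (B : 'M[R]_(n, m)) (C : 'M[R]_(p, n))
  (Cd : 'M[R]_(n, p)) (r : nat -> 'cV[R]_p) (S : set ('M[R]_n * 'M[R]_(m, N))) z :
  S z -> v_A1 B C Cd r S <= J_A1 B C Cd r z.1 z.2.
Proof.
move=> hz; apply: ge_inf; last by exists z.
by exists 0 => _ [w _ <-]; exact: J_ge0.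
Qed.

Lemma v_ge0 (R : realType) (n m p N : nat) (B : 'M[R]_(n, m)) (C : 'M[R]_(p, n))
  (Cd : 'M[R]_(n, p)) (r : nat -> 'cV[R]_p) (S : set ('M[R]_n * 'M[R]_(m, N))) z :
  S z -> 0 <= v_A1 B C Cd r S.
Proof.
move=> hz; apply: lb_le_inf; first by exists (J_A1 B C Cd r z.1 z.2); exists z.
by move=> _ [w _ <-]; exact: J_ge0.
Qed.

Theorem theorem4 (R : realType) (n m p N : nat)
  (hn : (0 < n)%N) (hm : (0 < m)%N) (hp : (0 < p)%N) (hN : (0 < N)%N)
  (B : 'M[R]_(n, m)) (C : 'M[R]_(p, n)) (hC : \rank C = n)
  (Cd : 'M[R]_(n, p)) (hCd : MP_inverse C Cd)
  (x0 : 'cV[R]_n) (r : nat -> 'cV[R]_p) (hr0 : r 0%N = C *m x0)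
  (S : set ('M[R]_n * 'M[R]_(m, N))) :
  (forall eps : nat -> R,
     (forall t : nat, (1 <= t <= N)%N -> 0 <= eps t) ->
     Z_eps B C Cd x0 r S eps !=set0 ->
     v_A1 B C Cd r S <=
       (1 + inf ((fun z => specnorm (C *m z.1 *m Cd)) @` Z_eps B C Cd x0 r S eps))
         * (\sum_(1 <= t < N) eps t) + eps N)
  /\
  ((exists2 z, S z & forall t : nat, (1 <= t <= N)%N ->
       yhat B C Cd x0 z.1 z.2 t = r t) ->
     v_A1 B C Cd r S = 0).
Proof.
split.
  move=> eps heps [z0 hz0].
  set E0 := \sum_(1 <= t < N) eps t.
  set g := inf _.
  have hE : 0 <= E0.
    have := @ler_sum_nat R 1 N (fun _ => 0) eps; rewrite big1_eq; apply.
    move=> t /andP[h1 h2]; apply: heps; rewrite h1 /=; exact: ltnW.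
  have hb : forall z, Z_eps B C Cd x0 r S eps z ->
      v_A1 B C Cd r S <= (1 + specnorm (C *m z.1 *m Cd)) * E0 + eps N.
    move=> z [hS hz]; apply: le_trans (@v_le _ _ _ _ _ B C Cd r S _ hS) _.
    exact: (@key R n m p N hN B C Cd x0 r hr0 z.1 z.2 eps hz).
  have [E00|Epos] := eqVneq E0 0.
    have := hb z0 hz0; rewrite E00 !mulr0 //.
  have hEp : 0 < E0 by rewrite lt_neqAle eq_sym Epos hE.
  set v := v_A1 B C Cd r S.
  have hg : (v - eps N) / E0 - 1 <= g.
    apply: lb_le_inf; first by exists (specnorm (C *m z0.1 *m Cd)); exists z0.
    move=> _ [z hz <-]; have := hb z hz.
    rewrite lerBlDr ler_pdivrMr // => h; lra.
  have := ler_wpM2r hE hg; rewrite mulrBl divfK ?Epos // mul1r.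
  lra.
move=> [z hS hz].
apply/eqP; rewrite eq_le (@v_ge0 _ _ _ _ _ B C Cd r S z hS) andbT.
apply: le_trans (@v_le _ _ _ _ _ B C Cd r S _ hS) _.
have := @key R n m p N hN B C Cd x0 r hr0 z.1 z.2 (fun _ => 0).
rewrite big1_eq mulr0 addr0; apply => t ht.
by rewrite hz // subrr enorm0.
Qed.
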